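(* Let $E$ be the equational theory of implicative semilattices (algebras in signature $\{\top,\wedge,\to\}$; the $\{\top,\wedge,\to\}$-fragment of intuitionistic logic) and $C=\{z\}$. The $C$-unification problem $\big((x\to z)\wedge(y\to z)\to z,\ \top\big)$ has the $C$-unifiers $\sigma=\{x\mapsto\top,\ y\mapsto y\}$ and $\tau=\{x\mapsto x,\ y\mapsto\top\}$ (both fixing $z$), which are incomparable, and there is no $C$-unifier $\mu$ such that both $\sigma$ and $\tau$ are less general than $\mu$. Consequently this problem has no $C$-mgu, and $E$ does not have unitary svr-unification type.
   Context: For a finite set $C$ of variables, a substitution $\sigma$ is $C$-invariant if $\sigma(c)=c$ for $c\in C$ and $\sigma(x)$ contains no variable of $C$ for $x\notin C$. A $C$-unifier of a problem $\{(\phi_j,\psi_j)\}$ is a $C$-invariant substitution $\sigma$ with $E\models\sigma(\phi_j)=\sigma(\psi_j)$ for all $j$. A substitution $\tau$ is less general than $\sigma$ if there is a substitution $\theta$ with $E\models\tau(v)=\theta(\sigma(v))$ for every variable $v$. A $C$-mgu is a $C$-unifier $\mu$ such that every $C$-unifier is less general than $\mu$; $E$ has unitary svr-unification type if every $C$-unification problem (for every $C$) with a $C$-unifier has a $C$-mgu. *)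

(* Defs.v *)
From Stdlib Require Import List.
Import ListNotations.

Inductive term : Type :=
| Var : nat -> term
| Top : term
| Meet : term -> term -> term
| Imp : term -> term -> term.

(* Implicative semilattice: a meet-semilattice with top element and a
   relative pseudocomplement (residual of meet). Order: a <= b iff a /\ b = a. *)
Record ISL : Type := {
  car :> Type;
  itop : car;
  imeet : car -> car -> car;
  iimp : car -> car -> car;
  imeet_assoc : forall a b c, imeet a (imeet b c) = imeet (imeet a b) c;
  imeet_comm : forall a b, imeet a b = imeet b a;
  imeet_idem : forall a, imeet a a = a;
  imeet_top : forall a, imeet a itop = a;
  iimp_residual : forall a b c,
      imeet (imeet c a) b = imeet c a <-> imeet c (iimp a b) = c
}.

Fixpoint eval (A : ISL) (v : nat -> A) (t : term) : A :=
  match t with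
  | Var n => v n
  | Top => itop A
  | Meet s u => imeet A (eval A v s) (eval A v u)
  | Imp s u => iimp A (eval A v s) (eval A v u)
  end.

Definition Eeq (s t : term) : Prop :=
  forall (A : ISL) (v : nat -> A), eval A v s = eval A v t.

Definition subst := nat -> term.

Fixpoint apply (sg : subst) (t : term) : term :=
  match t with
  | Var n => sg n
  | Top => Top
  | Meet s u => Meet (apply sg s) (apply sg u)
  | Imp s u => Imp (apply sg s) (apply sg u)
  end.

Fixpoint occurs (n : nat) (t : term) : Prop :=
  match t with
  | Var m => n = m
  | Top => False
  | Meet s u | Imp s u => occurs n s \/ occurs n u
  end.

Definition C_invariant (C : list nat) (sg : subst) : Prop :=
  (forall c, In c C -> sg c = Var c) /\
  (forall x, ~ In x C -> forall c, In c C -> ~ occurs c (sg x)).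

Definition problem := list (term * term).

Definition C_unifier (C : list nat) (P : problem) (sg : subst) : Prop :=
  C_invariant C sg /\
  forall p, In p P -> Eeq (apply sg (fst p)) (apply sg (snd p)).

Definition less_general (tau sg : subst) : Prop :=
  exists theta : subst, forall v, Eeq (tau v) (apply theta (sg v)).

Definition C_mgu (C : list nat) (P : problem) (mu : subst) : Prop :=
  C_unifier C P mu /\ forall tau, C_unifier C P tau -> less_general tau mu.

Definition unitary_svr : Prop :=
  forall (C : list nat) (P : problem),
    (exists sg, C_unifier C P sg) -> exists mu, C_mgu C P mu.

Definition vx := 0.
Definition vy := 1.
Definition vz := 2.
Definition Cz : list nat := [vz].

Definition the_problem : problem :=
  [(Imp (Meet (Imp (Var vx) (Var vz)) (Imp (Var vy) (Var vz))) (Var vz), Top)].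

Definition sigma0 : subst := fun n => if Nat.eqb n vx then Top else Var n.
Definition tau0 : subst := fun n => if Nat.eqb n vy then Top else Var n.

(* Main.v *)
Require Import Defs.
From Stdlib Require Import List Bool Arith Lia.
Import ListNotations.

Section ISLfacts.
Variable A : ISL.

Lemma top_imp_le (z : A) : imeet A (iimp A (itop A) z) z = iimp A (itop A) z.
Proof.
  pose proof (proj2 (iimp_residual A (itop A) z (iimp A (itop A) z))
                    (imeet_idem A _)) as H.
  rewrite imeet_top in H. exact H.
Qed.

Lemma imp_top_of_le (m z : A) : imeet A m z = m -> iimp A m z = itop A.
Proof.
  intro Hm.
  assert (H : imeet A (imeet A (itop A) m) z = imeet A (itop A) m).
  { rewrite (imeet_comm A (itop A) m), imeet_top. exact Hm. }
  apply (iimp_residual A) in H.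
  rewrite imeet_comm, imeet_top in H. exact H.
Qed.
End ISLfacts.

Lemma eval_apply (A : ISL) (v : nat -> A) (th : subst) (t : term) :
  eval A v (apply th t) = eval A (fun n => eval A v (th n)) t.
Proof. induction t; simpl; congruence. Qed.

Definition BoolISL : ISL.
Proof.
  refine (Build_ISL bool true andb implb _ _ _ _ _).
  - intros [] [] []; reflexivity.
  - intros [] []; reflexivity.
  - intros []; reflexivity.
  - intros []; reflexivity.
  - intros [] [] []; simpl; split; intro H; try reflexivity; discriminate H.
Defined.

(* ---------- the five-element ISL: (2x2) with a new top (None) ---------- *)
Definition B5 := option (bool * bool).
Definition bmeet (x y : B5) : B5 :=
  match x, y with
  | None, _ => y
  | _, None => x
  | Some (p1, p2), Some (q1, q2) => Some (p1 && q1, p2 && q2)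
  end.
Definition bimp (x y : B5) : B5 :=
  match x, y with
  | _, None => None
  | None, _ => y
  | Some (p1, p2), Some (q1, q2) =>
      if implb p1 q1 && implb p2 q2 then None else Some (implb p1 q1, implb p2 q2)
  end.
Definition hB (x : B5) : bool * bool :=
  match x with None => (true, true) | Some p => p end.

Ltac b5 := repeat match goal with
  | |- forall x : B5, _ => let x := fresh in intros [[[] []]|]
  end.

Definition ISL5 : ISL.
Proof.
  refine (Build_ISL B5 None bmeet bimp _ _ _ _ _).
  - intros [[[] []]|] [[[] []]|] [[[] []]|]; reflexivity.
  - intros [[[] []]|] [[[] []]|]; reflexivity.
  - intros [[[] []]|]; reflexivity.
  - intros [[[] []]|]; reflexivity.
  - intros [[[] []]|] [[[] []]|] [[[] []]|]; simpl; split; intro H;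
      try reflexivity; discriminate H.
Defined.

Lemma hB_meet (x y : B5) :
  hB (bmeet x y) = (fst (hB x) && fst (hB y), snd (hB x) && snd (hB y)).
Proof. destruct x as [[[] []]|], y as [[[] []]|]; reflexivity. Qed.
Lemma hB_imp (x y : B5) :
  hB (bimp x y) = (implb (fst (hB x)) (fst (hB y)), implb (snd (hB x)) (snd (hB y))).
Proof. destruct x as [[[] []]|], y as [[[] []]|]; reflexivity. Qed.

Lemma hom (t : term) (u : nat -> B5) (w1 w2 : nat -> bool) :
  (forall n, occurs n t -> hB (u n) = (w1 n, w2 n)) ->
  hB (eval ISL5 u t) = (eval BoolISL w1 t, eval BoolISL w2 t).
Proof.
  induction t; simpl; intro H.
  - apply H; reflexivity.
  - reflexivity.
  - change (hB (bmeet (eval ISL5 u t1) (eval ISL5 u t2)) =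
      (eval BoolISL w1 t1 && eval BoolISL w1 t2, eval BoolISL w2 t1 && eval BoolISL w2 t2)).
    rewrite hB_meet, IHt1, IHt2; auto.
  - change (hB (bimp (eval ISL5 u t1) (eval ISL5 u t2)) =
      (implb (eval BoolISL w1 t1) (eval BoolISL w1 t2),
       implb (eval BoolISL w2 t1) (eval BoolISL w2 t2))).
    rewrite hB_imp, IHt1, IHt2; auto.
Qed.

Lemma sigma_unif : C_unifier Cz the_problem sigma0.
Proof.
  split.
  - split.
    + intros c [<-|[]]; reflexivity.
    + intros x Hx c [<-|[]]. unfold sigma0.
      destruct (Nat.eqb x vx); simpl; [tauto|].
      intro E; apply Hx; left; exact E.
  - intros p [<-|[]] A v. simpl.
    apply imp_top_of_le.
    rewrite <- imeet_assoc, (imeet_comm A (iimp A (v vy) (v vz)) (v vz)), imeet_assoc.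
    rewrite top_imp_le. reflexivity.
Qed.

Lemma tau_unif : C_unifier Cz the_problem tau0.
Proof.
  split.
  - split.
    + intros c [<-|[]]; reflexivity.
    + intros x Hx c [<-|[]]. unfold tau0.
      destruct (Nat.eqb x vy); simpl; [tauto|].
      intro E; apply Hx; left; exact E.
  - intros p [<-|[]] A v. simpl.
    apply imp_top_of_le.
    rewrite <- imeet_assoc, top_imp_le. reflexivity.
Qed.

Lemma no_common (mu : subst) :
  C_unifier Cz the_problem mu -> less_general sigma0 mu -> less_general tau0 mu -> False.
Proof.
  intros [[Hc Hnc] Hu] [th1 H1] [th2 H2].
  set (v0 := fun _ : nat => false : BoolISL).
  set (w1 := fun n => eval BoolISL v0 (th1 n)).
  set (w2 := fun n => eval BoolISL v0 (th2 n)).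
  set (u := fun n => if Nat.eqb n 2 then (Some (true,true) : B5) else Some (w1 n, w2 n)).
  assert (Hm2 : mu 2 = Var 2) by (apply Hc; left; reflexivity).
  assert (Hfree : forall k, k <> 2 -> forall n, occurs n (mu k) -> hB (u n) = (w1 n, w2 n)).
  { intros k Hk n Hn. unfold u. destruct (Nat.eqb n 2) eqn:E.
    - apply Nat.eqb_eq in E; subst. exfalso.
      apply (Hnc k) with (c := 2); [intros [E|[]]; auto | left; reflexivity | exact Hn].
    - reflexivity. }
  assert (Ha : hB (eval ISL5 u (mu 0)) = (true, false)).
  { rewrite (hom _ _ w1 w2) by (apply Hfree; lia).
    unfold w1, w2. rewrite <- !eval_apply.
    rewrite <- (H1 0 BoolISL v0), <- (H2 0 BoolISL v0). reflexivity. }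
  assert (Hb : hB (eval ISL5 u (mu 1)) = (false, true)).
  { rewrite (hom _ _ w1 w2) by (apply Hfree; lia).
    unfold w1, w2. rewrite <- !eval_apply.
    rewrite <- (H1 1 BoolISL v0), <- (H2 1 BoolISL v0). reflexivity. }
  assert (Ea : eval ISL5 u (mu 0) = Some (true, false)).
  { destruct (eval ISL5 u (mu 0)) as [p|]; simpl in Ha; [congruence | discriminate]. }
  assert (Eb : eval ISL5 u (mu 1) = Some (false, true)).
  { destruct (eval ISL5 u (mu 1)) as [p|]; simpl in Hb; [congruence | discriminate]. }
  specialize (Hu _ (or_introl eq_refl) ISL5 u). simpl in Hu.
  unfold vx, vy, vz in Hu. rewrite Hm2, Ea, Eb in Hu. simpl in Hu. unfold u in Hu. simpl in Hu. discriminate Hu.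
Qed.

Theorem mainTheorem12 :
  C_unifier Cz the_problem sigma0 /\
  C_unifier Cz the_problem tau0 /\
  ~ less_general sigma0 tau0 /\ ~ less_general tau0 sigma0 /\
  ~ (exists mu, C_unifier Cz the_problem mu /\
                less_general sigma0 mu /\ less_general tau0 mu) /\
  ~ (exists mu, C_mgu Cz the_problem mu) /\
  ~ unitary_svr.
Proof.
  assert (N6 : ~ (exists mu, C_mgu Cz the_problem mu)).
  { intros [mu [Hu Hall]].
    exact (no_common mu Hu (Hall _ sigma_unif) (Hall _ tau_unif)). }
  split; [exact sigma_unif|].
  split; [exact tau_unif|].
  split.
  { intros [th H]. specialize (H 1 BoolISL (fun _ => false)). discriminate H. }
  split.
  { intros [th H]. specialize (H 0 BoolISL (fun _ => false)). discriminate H. }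
  split.
  { intros [mu [Hu [Hs Ht]]]. exact (no_common mu Hu Hs Ht). }
  split; [exact N6|].
  intro U. apply N6. apply U. exists sigma0. exact sigma_unif.
Qed.
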